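(* Let $N\to\infty$, $p=p(N)$ with $p(1-p)N\to\infty$, and $S=S(N)$, $T=T(N)$ such that $N-S$ and $N+S-T$ are nonnegative integers, $pS/(p(1-p)N)^{1/2}\to\infty$, $pS=o((p(1-p)N)^{2/3})$, and $T=o(N)$. Let $Z_1\sim B(N-S,p)$ and $Z_2\sim B(N+S-T,p)$ be independent. Then for all sufficiently large $N$, $$\mathbb{P}(Z_1=Z_2+pT)<\frac{S}{2\pi(1-p)N}\exp\!\left(-\frac{2pS^2}{(1-p)(2N-T)}+o(1)\right)+\frac{3}{\pi pS}\exp\!\left(-\frac{9pS^2}{8(1-p)N}\right),$$ where $o(1)\to0$ as $N\to\infty$.
   Context: $B(n,p)$ denotes a binomial random variable with parameters $n$ and $p$. *)

(* Defs.v *)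
From Stdlib Require Import Reals.
Open Scope R_scope.

Definition binom_pmf (n : nat) (p : R) (k : nat) : R :=
  if Nat.leb k n then C n k * p ^ k * (1 - p) ^ (n - k) else 0.

(* P(Z1 = Z2 + c) for independent Z1 ~ B(n1,p), Z2 ~ B(n2,p):
   sum of the joint pmf over all pairs (k, j) with k = j + c. *)
Definition prob_diff_eq (n1 n2 : nat) (p c : R) : R :=
  sum_f_R0 (fun j =>
    sum_f_R0 (fun k =>
      if Req_EM_T (INR k) (INR j + c)
      then binom_pmf n1 p k * binom_pmf n2 p j else 0) n1) n2.

(* Main.v *)
Require Import Defs.
From Stdlib Require Import Reals Lra Lia Psatz ZArith.
Open Scope R_scope.

Lemma mono_der (f f' : R -> R) a b : a <= b ->
  (forall c, a <= c <= b -> derivable_pt_lim f c (f' c)) ->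
  (forall c, a <= c <= b -> 0 <= f' c) -> f a <= f b.
Proof.
  intros Hab Hd Hp. destruct (Req_dec a b) as [->|Hne]; [lra|].
  destruct (MVT_cor2 f f' a b) as [c [Hc Hc2]]; [lra|exact Hd|].
  assert (0 <= f' c) by (apply Hp; lra). nra.
Qed.

Lemma exp_le1 x : 0 <= x <= 1 -> exp x <= 1 + 6 * x.
Proof.
  intros Hx. pose (f := fun y => 1 + 6 * y - exp y).
  assert (f 0 <= f x).
  { apply (mono_der f (fun y => 6 - exp y)). lra.
    - intros c _. unfold f. replace (6 - exp c) with (0 + 6 * 1 - exp c) by ring.
      apply derivable_pt_lim_minus. apply derivable_pt_lim_plus.
      apply derivable_pt_lim_const. apply derivable_pt_lim_scal. apply derivable_pt_lim_id.
      apply derivable_pt_lim_exp.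
    - intros c Hc. assert (exp c <= exp 1).
      { destruct (Req_dec c 1) as [->|]; [lra|]. left; apply exp_increasing; lra. }
      pose proof exp_le_3. lra. }
  unfold f in H. rewrite exp_0 in H. lra.
Qed.

Lemma exp_le2 x : 0 <= x <= 1 -> exp x <= 1 + x + 3 * x^2.
Proof.
  intros Hx. pose (f := fun y => 1 + y + 3 * y^2 - exp y).
  assert (f 0 <= f x).
  { apply (mono_der f (fun y => 1 + 6 * y - exp y)). lra.
    - intros c _. unfold f. replace (1 + 6 * c - exp c) with (0 + 1 + 3 * (INR 2 * c ^ 1) - exp c) by (simpl; ring).
      apply derivable_pt_lim_minus. apply derivable_pt_lim_plus. apply derivable_pt_lim_plus.
      apply derivable_pt_lim_const. apply derivable_pt_lim_id.
      apply derivable_pt_lim_scal. apply (derivable_pt_lim_pow c 2).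
      apply derivable_pt_lim_exp.
    - intros c Hc. pose proof (exp_le1 c). lra. }
  unfold f in H. rewrite exp_0 in H. simpl in H. lra.
Qed.

Lemma exp_le3 x : 0 <= x <= 1 -> exp x <= 1 + x + x^2/2 + x^3.
Proof.
  intros Hx. pose (f := fun y => 1 + y + y^2/2 + y^3 - exp y).
  assert (f 0 <= f x).
  { apply (mono_der f (fun y => 1 + y + 3 * y^2 - exp y)). lra.
    - intros c _. unfold f.
      replace (1 + c + 3 * c^2 - exp c) with (0 + 1 + (INR 2 * c ^ 1)/2 + (INR 3 * c^2) - exp c) by (simpl; field).
      apply derivable_pt_lim_minus. apply derivable_pt_lim_plus. apply derivable_pt_lim_plus.
      apply derivable_pt_lim_plus.
      apply derivable_pt_lim_const. apply derivable_pt_lim_id.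
      unfold Rdiv. apply derivable_pt_lim_scal_right. apply (derivable_pt_lim_pow c 2).
      apply (derivable_pt_lim_pow c 3).
      apply derivable_pt_lim_exp.
    - intros c Hc. pose proof (exp_le2 c). lra. }
  unfold f in H. rewrite exp_0 in H. simpl in H. lra.
Qed.

Lemma exp_le_neg x : x <= 0 -> exp x <= 1 + x + x^2/2.
Proof.
  intros Hx. pose (f := fun y => 1 + y + y^2/2 - exp y).
  assert (f (-0) <= f (- - x)).
  { apply (mono_der (fun y => f (-y)) (fun y => -(1 + -y - exp (-y))) 0 (-x)). lra.
    - intros c _. unfold f.
      replace (-(1 + -c - exp (-c))) with ((0 + (-1) + (INR 2 * (-c) ^ 1 * (-1))/2) - (exp (-c) * (-1))) by (simpl; field).
      apply derivable_pt_lim_minus. apply derivable_pt_lim_plus. apply derivable_pt_lim_plus.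
      apply derivable_pt_lim_const. apply derivable_pt_lim_opp. apply derivable_pt_lim_id.
      unfold Rdiv. apply derivable_pt_lim_scal_right.
      apply (derivable_pt_lim_comp (fun y => -y) (fun y => y^2)). apply derivable_pt_lim_opp. apply derivable_pt_lim_id.
      apply (derivable_pt_lim_pow (-c) 2).
      apply (derivable_pt_lim_comp (fun y => -y) exp). apply derivable_pt_lim_opp. apply derivable_pt_lim_id.
      apply derivable_pt_lim_exp.
    - intros c Hc. pose proof (exp_ineq1_le (-c)). lra. }
  replace (- 0) with 0 in H by ring. replace (- -x) with x in H by ring.
  unfold f in H. rewrite exp_0 in H. simpl in H. lra.
Qed.

Lemma mgf1 p t : 0 < p < 1 -> 0 <= t <= 1 ->
  (1-p) + p * exp t <= exp (p*t + (p*(1-p)*t^2/2 + p*(1-p)*t^3)).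
Proof.
  intros Hp Ht. set (a := p*(1-p)*t^2/2 + p*(1-p)*t^3).
  assert (E: (1-p) + p * exp t = exp (p*t) * ((1-p) * exp (-(p*t)) + p * exp ((1-p)*t))).
  { assert (X1: exp (p*t) * exp (-(p*t)) = 1) by (rewrite <- exp_plus; replace (p*t + -(p*t)) with 0 by ring; apply exp_0).
    assert (X2: exp (p*t) * exp ((1-p)*t) = exp t) by (rewrite <- exp_plus; f_equal; ring).
    replace (exp (p*t) * ((1-p) * exp (-(p*t)) + p * exp ((1-p)*t))) with ((1-p) * (exp (p*t) * exp (-(p*t))) + p * (exp (p*t) * exp ((1-p)*t))) by ring.
    rewrite X1, X2. ring. }
  rewrite E, exp_plus. apply Rmult_le_compat_l. left; apply exp_pos.
  pose proof (exp_le_neg (-(p*t))) as H1. pose proof (exp_le3 ((1-p)*t)) as H2.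
  pose proof (exp_ineq1_le a).
  assert (H1' : exp (-(p*t)) <= 1 + -(p*t) + (-(p*t))^2/2) by (apply H1; nra).
  assert (H2' : exp ((1-p)*t) <= 1 + (1-p)*t + ((1-p)*t)^2/2 + ((1-p)*t)^3) by (apply H2; nra).
  assert (K: (1-p) * exp (-(p*t)) + p * exp ((1-p)*t) <= 1 + p*(1-p)*t^2/2 + p*(1-p)^3*t^3).
  { assert (0 < 1-p) by lra.
    apply Rle_trans with ((1-p)*(1 + -(p*t) + (-(p*t))^2/2) + p*(1 + (1-p)*t + ((1-p)*t)^2/2 + ((1-p)*t)^3)).
    apply Rplus_le_compat; apply Rmult_le_compat_l; lra. right; field. }
  assert (p*(1-p)^3*t^3 <= p*(1-p)*t^3).
  { assert (0 <= t^3) by (apply pow_le; lra). assert ((1-p)^2 <= 1) by nra.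
    assert (0 <= p*(1-p)*t^3) by (apply Rmult_le_pos; [nra|lra]).
    replace (p*(1-p)^3*t^3) with ((1-p)^2 * (p*(1-p)*t^3)) by ring. nra. }
  unfold a in *. lra.
Qed.

Lemma mgf2 p t : 0 < p < 1 -> 0 <= t <= 1 ->
  (1-p) + p * exp (-t) <= exp (-(p*t) + (p*(1-p)*t^2/2 + p*(1-p)*t^3)).
Proof.
  intros Hp Ht. set (a := p*(1-p)*t^2/2 + p*(1-p)*t^3).
  assert (E: (1-p) + p * exp (-t) = exp (-(p*t)) * ((1-p) * exp (p*t) + p * exp (-((1-p)*t)))).
  { assert (X1: exp (-(p*t)) * exp (p*t) = 1) by (rewrite <- exp_plus; replace (-(p*t) + p*t) with 0 by ring; apply exp_0).
    assert (X2: exp (-(p*t)) * exp (-((1-p)*t)) = exp (-t)) by (rewrite <- exp_plus; f_equal; ring).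
    replace (exp (-(p*t)) * ((1-p) * exp (p*t) + p * exp (-((1-p)*t)))) with ((1-p) * (exp (-(p*t)) * exp (p*t)) + p * (exp (-(p*t)) * exp (-((1-p)*t)))) by ring.
    rewrite X1, X2. ring. }
  rewrite E, exp_plus. apply Rmult_le_compat_l. left; apply exp_pos.
  pose proof (exp_le_neg (-((1-p)*t))) as H1. pose proof (exp_le3 (p*t)) as H2.
  pose proof (exp_ineq1_le a).
  assert (H1' : exp (-((1-p)*t)) <= 1 + -((1-p)*t) + (-((1-p)*t))^2/2) by (apply H1; nra).
  assert (H2' : exp (p*t) <= 1 + p*t + (p*t)^2/2 + (p*t)^3) by (apply H2; nra).
  assert (K: (1-p) * exp (p*t) + p * exp (-((1-p)*t)) <= 1 + p*(1-p)*t^2/2 + (1-p)*p^3*t^3).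
  { assert (0 < 1-p) by lra.
    apply Rle_trans with ((1-p)*(1 + p*t + (p*t)^2/2 + (p*t)^3) + p*(1 + -((1-p)*t) + (-((1-p)*t))^2/2)).
    apply Rplus_le_compat; apply Rmult_le_compat_l; lra. right; field. }
  assert ((1-p)*p^3*t^3 <= p*(1-p)*t^3).
  { assert (0 <= t^3) by (apply pow_le; lra). assert (p^2 <= 1) by nra.
    assert (0 <= p*(1-p)*t^3) by (apply Rmult_le_pos; [nra|lra]).
    replace ((1-p)*p^3*t^3) with (p^2 * (p*(1-p)*t^3)) by ring. nra. }
  unfold a in *. lra.
Qed.

Lemma pow_exp x n : exp x ^ n = exp (INR n * x).
Proof.
  induction n. simpl. rewrite Rmult_0_l, exp_0. reflexivity.
  rewrite S_INR. simpl pow. rewrite IHn, <- exp_plus. f_equal. ring.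
Qed.

Lemma C_pos n k : 0 < C n k.
Proof. unfold C. apply Rdiv_lt_0_compat. apply INR_fact_lt_0.
  apply Rmult_lt_0_compat; apply INR_fact_lt_0. Qed.

Lemma binom_nonneg n r k : 0 <= r <= 1 -> 0 <= binom_pmf n r k.
Proof. intros Hr. unfold binom_pmf. destruct (Nat.leb k n); [|lra].
  apply Rmult_le_pos; [apply Rmult_le_pos|]; try (apply pow_le; lra). left; apply C_pos. Qed.

Lemma binom_sum n r : sum_f_R0 (binom_pmf n r) n = 1.
Proof.
  rewrite <- (pow1 n). replace 1 with (r + (1-r)) by ring. rewrite binomial.
  apply sum_eq. intros i Hi. unfold binom_pmf.
  replace (Nat.leb i n) with true by (symmetry; apply Nat.leb_le; lia). reflexivity.
Qed.

Lemma binom_sym n r k : (k <= n)%nat -> binom_pmf n r k = binom_pmf n (1-r) (n-k).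
Proof.
  intros Hk. unfold binom_pmf.
  replace (Nat.leb k n) with true by (symmetry; apply Nat.leb_le; lia).
  replace (Nat.leb (n-k) n) with true by (symmetry; apply Nat.leb_le; lia).
  rewrite (pascal_step1 n k Hk). replace (n - (n-k))%nat with k by lia.
  replace (1 - (1 - r)) with r by ring. ring.
Qed.

Lemma binom_ratio n r i : (i < n)%nat ->
  binom_pmf n r i * (INR (n-i) * r) = binom_pmf n r (S i) * (INR (S i) * (1-r)).
Proof.
  intros Hi. unfold binom_pmf.
  replace (Nat.leb i n) with true by (symmetry; apply Nat.leb_le; lia).
  replace (Nat.leb (S i) n) with true by (symmetry; apply Nat.leb_le; lia).
  rewrite (pascal_step3 n i Hi). replace (n - i)%nat with (S (n - S i)) by lia.
  assert (0 < INR (S i)) by (apply lt_0_INR; lia).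
  simpl pow. field. lra.
Qed.

Lemma binom_tilt n p t k : 0 < p < 1 ->
  exp t ^ k * binom_pmf n p k =
  ((1-p) + p * exp t) ^ n * binom_pmf n (p * exp t / ((1-p) + p * exp t)) k.
Proof.
  intros Hp. set (s := (1-p) + p * exp t).
  assert (Hs: 0 < s) by (unfold s; pose proof (exp_pos t); nra).
  unfold binom_pmf. destruct (Nat.leb k n) eqn:E; [|ring].
  apply Nat.leb_le in E.
  assert (Hs0 : s <> 0) by lra.
  replace (1 - p * exp t / s) with ((1-p)/s).
  2:{ apply Rmult_eq_reg_r with s; auto. field_simplify; auto. unfold s; field. }
  replace (s^n) with (s^k * s^(n-k)) by (rewrite <- pow_add; f_equal; lia).
  unfold Rdiv. rewrite !Rpow_mult_distr, !pow_inv.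
  assert (0 < s^k) by (apply pow_lt; lra). assert (0 < s^(n-k)) by (apply pow_lt; lra).
  field. lra.
Qed.

Lemma tilt_prob p t : 0 < p < 1 ->
  0 < p * exp t / ((1-p) + p * exp t) < 1.
Proof.
  intros Hp. pose proof (exp_pos t).
  assert (0 < (1-p) + p * exp t) by nra. split.
  apply Rdiv_lt_0_compat; nra.
  apply Rmult_lt_reg_r with ((1-p) + p * exp t); auto. unfold Rdiv. rewrite Rmult_assoc, Rinv_l; lra.
Qed.

Lemma count_sum (f : nat -> R) c lo hi : 0 <= c -> (forall j, 0 <= f j) ->
  (forall j, (lo <= j <= hi)%nat -> c <= f j) ->
  forall m, INR (Nat.min hi m + 1 - lo) * c <= sum_f_R0 f m.
Proof.
  intros Hc Hf Hw. induction m.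
  - simpl. destruct lo.
    + replace (Nat.min hi 0 + 1 - 0)%nat with 1%nat by lia. rewrite Rmult_1_l. apply Hw. lia.
    + replace (Nat.min hi 0 + 1 - S lo)%nat with 0%nat by lia. simpl. rewrite Rmult_0_l. apply Hf.
  - simpl sum_f_R0.
    destruct (le_lt_dec lo (S m)); [destruct (le_lt_dec (S m) hi)|].
    + replace (Nat.min hi (S m) + 1 - lo)%nat with (S (Nat.min hi m + 1 - lo)) by lia.
      rewrite S_INR. assert (c <= f (S m)) by (apply Hw; lia). lra.
    + replace (Nat.min hi (S m) + 1 - lo)%nat with (Nat.min hi m + 1 - lo)%nat by lia.
      pose proof (Hf (S m)). lra.
    + replace (Nat.min hi (S m) + 1 - lo)%nat with (Nat.min hi m + 1 - lo)%nat by lia.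
      pose proof (Hf (S m)). lra.
Qed.

Lemma exists_floor y : 0 <= y -> exists L : nat, INR L <= y < INR L + 1.
Proof.
  intros Hy. destruct (base_Int_part y) as [H1 H2].
  assert (Hz : (0 <= Int_part y)%Z).
  { assert (-1 < IZR (Int_part y)) by lra. apply lt_IZR in H. lia. }
  exists (Z.to_nat (Int_part y)). rewrite INR_IZR_INZ, Z2Nat.id by auto. lra.
Qed.

Lemma maxpmf_case1 n r k : 0 < r < 1 -> 4 <= INR n * r * (1-r) -> (k <= n)%nat ->
  INR n * r <= INR k -> binom_pmf n r k <= 3 / sqrt (INR n * r * (1-r)).
Proof.
  intros Hr Hv Hk Hkr. set (v := INR n * r * (1-r)) in *.
  set (sg := sqrt v).
  assert (Hsg2 : sg * sg = v) by (apply sqrt_sqrt; lra).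
  assert (Hsg : 2 <= sg).
  { unfold sg. rewrite <- (sqrt_square 2) by lra. apply sqrt_le_1_alt; lra. }
  destruct (exists_floor (sg/2)) as [L [HL1 HL2]]; [lra|].
  set (a := binom_pmf n r).
  assert (Ha : forall j, 0 <= a j) by (intro; apply binom_nonneg; lra).
  assert (Hnr : v <= INR n * r).
  { unfold v. assert (0 <= INR n * r) by (apply Rmult_le_pos; [apply pos_INR|lra]). nra. }
  assert (HLk : (L <= k)%nat).
  { apply INR_le. nra. }
  set (x := INR L / v).
  assert (Hxv : x * v = INR L) by (unfold x; field; lra).
  assert (HL0 : 0 <= INR L) by apply pos_INR.
  assert (Hx0 : 0 <= x) by (unfold x; apply Rmult_le_pos; [lra|left; apply Rinv_0_lt_compat; lra]).
  assert (HLx : INR L * x <= 1/4).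
  { apply Rmult_le_reg_r with v; [lra|]. rewrite Rmult_assoc, Hxv. nra. }
  assert (Hx1 : x <= 1/4).
  { destruct (Req_dec (INR L) 0) as [E|E].
    - unfold x. rewrite E. unfold Rdiv. rewrite Rmult_0_l. lra.
    - assert (1 <= INR L).
      { destruct L. simpl in E; lra. rewrite S_INR. pose proof (pos_INR L). lra. }
      nra. }
  assert (Step : forall i, (i < n)%nat -> INR n * r - INR L <= INR i -> (1 - x) * a (S i) <= a i).
  { intros i Hi Hii. pose proof (binom_ratio n r i Hi) as R. fold a in R.
    rewrite minus_INR in R by lia. rewrite S_INR in R.
    assert (Hni : 0 < (INR n - INR i) * r).
    { apply Rmult_lt_0_compat; [|lra]. apply lt_INR in Hi. lra. }
    apply Rmult_le_reg_r with ((INR n - INR i) * r); auto. rewrite R.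
    assert (K : (1 - x) * ((INR n - INR i) * r) <= (INR i + 1) * (1 - r)).
    { assert (K1 : (1-x) * ((INR n - INR i) * r) <= (1-x) * ((INR n - (INR n * r - INR L)) * r)).
      { apply Rmult_le_compat_l; [lra|]. apply Rmult_le_compat_r; lra. }
      assert (K2 : (INR n * r - INR L) * (1 - r) <= (INR i + 1) * (1-r)).
      { apply Rmult_le_compat_r; lra. }
      assert (K3 : (1-x) * ((INR n - (INR n * r - INR L)) * r) <= (INR n * r - INR L) * (1 - r)).
      { replace ((1-x) * ((INR n - (INR n * r - INR L)) * r)) with
          (v + INR L * r - INR L - x * INR L * r) by (rewrite <- Hxv; unfold v; ring).
        replace ((INR n * r - INR L) * (1 - r)) with (v - INR L * (1-r)) by (unfold v; ring).
        assert (0 <= x * INR L * r) by (apply Rmult_le_pos; [apply Rmult_le_pos|]; lra). lra. }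
      lra. }
    specialize (Ha (S i)). nra. }
  assert (Iter : forall m, (m <= L)%nat -> (1 - INR m * x) * a k <= a (k - m)%nat).
  { induction m; intros Hm.
    - simpl. replace (k - 0)%nat with k by lia. lra.
    - assert (HS : (k - m)%nat = S (k - S m)) by lia.
      pose proof (Step (k - S m)%nat ltac:(lia)) as St.
      rewrite <- HS in St.
      assert (HI : INR n * r - INR L <= INR (k - S m)).
      { rewrite minus_INR by lia. rewrite S_INR. apply le_INR in Hm. rewrite S_INR in Hm. lra. }
      specialize (St HI). specialize (IHm ltac:(lia)).
      rewrite S_INR. pose proof (Ha k). pose proof (pos_INR m).
      assert (HmL : INR m * x <= 1/4).
      { apply le_INR in Hm. rewrite S_INR in Hm. nra. }
      assert ((1 - (INR m + 1) * x) * a k <= (1-x) * ((1 - INR m * x) * a k)).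
      { assert (0 <= INR m * x) by (apply Rmult_le_pos; lra).
        assert (0 <= INR m * x * x) by (apply Rmult_le_pos; lra).
        assert (0 <= INR m * x * x * a k) by (apply Rmult_le_pos; lra). nra. }
      assert ((1-x) * ((1 - INR m * x) * a k) <= (1-x) * a (k - m)%nat).
      { apply Rmult_le_compat_l; lra. }
      lra. }
  assert (Win : forall j, ((k - L) <= j <= k)%nat -> 3/4 * a k <= a j).
  { intros j Hj. pose proof (Iter (k - j)%nat ltac:(lia)) as I.
    replace (k - (k - j))%nat with j in I by lia.
    assert (INR (k - j) * x <= 1/4).
    { assert (INR (k-j) <= INR L) by (apply le_INR; lia). nra. }
    pose proof (Ha k). nra. }
  pose proof (count_sum a (3/4 * a k) (k - L) k ltac:(pose proof (Ha k); lra) Ha Win n) as CS.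
  replace (Nat.min k n + 1 - (k - L))%nat with (S L) in CS by lia.
  unfold a in CS. rewrite binom_sum in CS. fold a in CS. rewrite S_INR in CS.
  fold a. fold sg.
  apply Rmult_le_reg_r with sg; [lra|]. unfold Rdiv. rewrite Rmult_assoc, Rinv_l, Rmult_1_r by lra.
  pose proof (Ha k). nra.
Qed.

Lemma maxpmf n r k : 0 < r < 1 -> 4 <= INR n * r * (1-r) ->
  binom_pmf n r k <= 3 / sqrt (INR n * r * (1-r)).
Proof.
  intros Hr Hv.
  assert (0 < sqrt (INR n * r * (1-r))) by (apply sqrt_lt_R0; lra).
  assert (0 < 3 / sqrt (INR n * r * (1-r))) by (apply Rdiv_lt_0_compat; lra).
  destruct (le_lt_dec k n) as [Hk|Hk].
  2:{ unfold binom_pmf. replace (Nat.leb k n) with false by (symmetry; apply Nat.leb_gt; lia). lra. }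
  destruct (Rle_lt_dec (INR n * r) (INR k)).
  - apply maxpmf_case1; auto.
  - rewrite binom_sym by auto.
    replace (INR n * r * (1-r)) with (INR n * (1-r) * (1 - (1-r))) by ring.
    apply maxpmf_case1; try lra; try lia.
    rewrite minus_INR by auto. lra.
Qed.

Lemma sum_zero (x : R) f n : (forall k, (k <= n)%nat -> INR k <> x) ->
  sum_f_R0 (fun k => if Req_EM_T (INR k) x then f k else 0) n = 0.
Proof.
  induction n; intros H; cbn [sum_f_R0].
  - destruct (Req_EM_T (INR 0) x) as [e|]; [exfalso; apply (H 0%nat); auto|reflexivity].
  - rewrite IHn by (intros; apply H; lia).
    destruct (Req_EM_T (INR (S n)) x) as [e|]; [exfalso; apply (H (S n)); auto|ring].
Qed.

Lemma sum_single x f B n : (forall k, 0 <= f k <= B) -> 0 <= B ->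
  sum_f_R0 (fun k => if Req_EM_T (INR k) x then f k else 0) n <= B.
Proof.
  intros Hf HB. induction n; cbn [sum_f_R0].
  - destruct (Req_EM_T (INR 0) x); [apply Hf|lra].
  - destruct (Req_EM_T (INR (S n)) x) as [e|].
    + rewrite sum_zero. pose proof (Hf (S n)); lra.
      intros k Hk E. rewrite <- e in E. apply INR_eq in E. lia.
    + lra.
Qed.

Lemma tilt_bound n1 n2 p c t Bd : 0 < p < 1 ->
  (forall k, binom_pmf n1 (p * exp t / ((1-p) + p * exp t)) k <= Bd) ->
  prob_diff_eq n1 n2 p c <=
  ((1-p) + p * exp t) ^ n1 * ((1-p) + p * exp (-t)) ^ n2 * exp (-(t*c)) * Bd.
Proof.
  intros Hp HB.
  set (s1 := (1-p) + p * exp t). set (s2 := (1-p) + p * exp (-t)).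
  set (p1 := p * exp t / s1). set (p2 := p * exp (-t) / s2).
  assert (Hp1 := tilt_prob p t Hp). assert (Hp2 := tilt_prob p (-t) Hp). fold s1 p1 in Hp1. fold s2 p2 in Hp2.
  set (K := s1 ^ n1 * s2 ^ n2 * exp (-(t*c))).
  assert (HK : 0 <= K).
  { unfold K. assert (0 < s1) by (unfold s1; pose proof (exp_pos t); nra).
    assert (0 < s2) by (unfold s2; pose proof (exp_pos (-t)); nra).
    pose proof (exp_pos (-(t*c))). pose proof (pow_lt s1 n1). pose proof (pow_lt s2 n2).
    apply Rmult_le_pos; [apply Rmult_le_pos|]; left; auto. }
  assert (HB0 : 0 <= Bd) by (apply Rle_trans with (binom_pmf n1 p1 0); [apply binom_nonneg; lra|apply HB]).
  unfold prob_diff_eq.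
  apply Rle_trans with (sum_f_R0 (fun j => K * (Bd * binom_pmf n2 p2 j)) n2).
  - apply sum_Rle. intros j Hj.
    apply Rle_trans with (sum_f_R0 (fun k => K * (if Req_EM_T (INR k) (INR j + c)
        then binom_pmf n1 p1 k * binom_pmf n2 p2 j else 0)) n1).
    + right. apply sum_eq. intros k Hk.
      destruct (Req_EM_T (INR k) (INR j + c)) as [e|]; [|ring].
      pose proof (binom_tilt n1 p t k Hp) as T1. pose proof (binom_tilt n2 p (-t) j Hp) as T2.
      fold s1 p1 in T1. fold s2 p2 in T2. rewrite pow_exp in T1, T2.
      unfold K.
      assert (E : exp (INR k * t) * exp (INR j * - t) = exp (t * c)).
      { rewrite <- exp_plus. f_equal. rewrite e. ring. }
      assert (E2 : exp (-(t*c)) * exp (t*c) = 1) by (rewrite <- exp_plus; replace (-(t*c) + t*c) with 0 by ring; apply exp_0).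
      transitivity (exp (-(t*c)) * ((exp (INR k * t) * binom_pmf n1 p k) * (exp (INR j * - t) * binom_pmf n2 p j))).
      * replace (exp (-(t*c)) * ((exp (INR k * t) * binom_pmf n1 p k) * (exp (INR j * - t) * binom_pmf n2 p j)))
          with ((exp (-(t*c)) * (exp (INR k * t) * exp (INR j * - t))) * (binom_pmf n1 p k * binom_pmf n2 p j)) by ring.
        rewrite E, E2. ring.
      * rewrite T1, T2. ring.
    + erewrite sum_eq; [|intros k _; apply Rmult_comm].
      rewrite <- scal_sum. apply Rmult_le_compat_l; auto.
      apply sum_single.
      * intros k. split. apply Rmult_le_pos; apply binom_nonneg; lra.
        apply Rmult_le_compat_r. apply binom_nonneg; lra. apply HB.
      * apply Rmult_le_pos; auto. apply binom_nonneg; lra.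
  - rewrite (sum_eq _ (fun k => binom_pmf n2 p2 k * (K * Bd))) by (intros; ring).
    rewrite <- scal_sum, binom_sum. fold s1 s2 K. lra.
Qed.

Lemma key2 (N n1 n2 : nat) p S T : 0 < p < 1 -> INR n1 = INR N - S -> INR n2 = INR N + S - T ->
  0 < 2 * INR N - T -> 0 <= S -> 2 * p * S <= p * (1-p) * (2 * INR N - T) ->
  12 <= INR n1 * p * (1-p) ->
  prob_diff_eq n1 n2 p (p * T) <=
  exp (- (2 * p * S ^ 2) / ((1 - p) * (2 * INR N - T)) + 8 * (p*S)^3 / (p * (1-p) * (2 * INR N - T))^2)
  * (6 / sqrt (INR n1 * p * (1-p))).
Proof.
  intros Hp H1 H2 HW HS Ht Hn.
  set (V := p * (1-p) * (2 * INR N - T)) in *.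
  assert (HV : 0 < V) by (unfold V; apply Rmult_lt_0_compat; [nra|lra]).
  set (t := 2 * p * S / V).
  assert (Ht0 : 0 <= t) by (unfold t; apply Rmult_le_pos; [nra|left; apply Rinv_0_lt_compat; lra]).
  assert (Ht1 : t <= 1).
  { unfold t. apply Rmult_le_reg_r with V; auto. unfold Rdiv. rewrite Rmult_assoc, Rinv_l; lra. }
  set (s1 := (1-p) + p * exp t). set (s2 := (1-p) + p * exp (-t)).
  set (p1 := p * exp t / s1).
  assert (Hp1 := tilt_prob p t Hp). fold s1 p1 in Hp1.
  assert (Hs1 : 0 < s1) by (unfold s1; pose proof (exp_pos t); nra).
  assert (Hs2 : 0 < s2) by (unfold s2; pose proof (exp_pos (-t)); nra).
  assert (Het : exp t <= 3).
  { pose proof exp_le_3. destruct (Req_dec t 1) as [->|]; [lra|]. pose proof (exp_increasing t 1). lra. }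
  assert (Het1 : 1 <= exp t) by (pose proof (exp_ineq1_le t); lra).
  assert (Hpp1 : p * (1-p) <= 3 * (p1 * (1 - p1))).
  { assert (E1 : 1 - p1 = (1-p)/s1).
    { unfold p1. apply Rmult_eq_reg_r with s1; [|lra]. field_simplify; try lra. unfold s1; ring. }
    replace (p1 * (1 - p1)) with (p * (1-p) * exp t / (s1 * s1)) by (rewrite E1; unfold p1; field; lra).
    assert (s1 <= exp t) by (unfold s1; nra).
    assert (s1 * s1 <= 3 * exp t) by nra.
    apply Rmult_le_reg_r with (s1 * s1); [nra|].
    replace (3 * (p * (1 - p) * exp t / (s1 * s1)) * (s1 * s1)) with (3 * (p * (1 - p) * exp t)) by (field; lra).
    assert (0 < p * (1-p)) by nra. nra. }
  assert (Hv1 : 4 <= INR n1 * p1 * (1 - p1)).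
  { assert (0 <= INR n1) by apply pos_INR. nra. }
  pose proof (tilt_bound n1 n2 p (p*T) t (3 / sqrt (INR n1 * p1 * (1 - p1))) Hp
    (fun k => maxpmf n1 p1 k Hp1 Hv1)) as TB.
  fold s1 s2 in TB. fold p1 in TB.
  eapply Rle_trans; [exact TB|].
  set (a := p*(1-p)*t^2/2 + p*(1-p)*t^3).
  assert (M1 : s1 ^ n1 <= exp (INR n1 * (p*t + a))).
  { rewrite <- pow_exp. apply pow_incr. split; [lra|]. apply mgf1; lra. }
  assert (M2 : s2 ^ n2 <= exp (INR n2 * (-(p*t) + a))).
  { rewrite <- pow_exp. apply pow_incr. split; [lra|]. apply mgf2; lra. }
  assert (EX : INR n1 * (p*t + a) + INR n2 * (-(p*t) + a) + -(t * (p*T)) =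
     - (2 * p * S ^ 2) / ((1 - p) * (2 * INR N - T)) + 8 * (p*S)^3 / V^2).
  { rewrite H1, H2. unfold a, t, V. field. split; [lra|]. split; [lra|]. lra. }
  assert (BD : 3 / sqrt (INR n1 * p1 * (1 - p1)) <= 6 / sqrt (INR n1 * p * (1-p))).
  { assert (Q1 : 0 < sqrt (INR n1 * p1 * (1 - p1))) by (apply sqrt_lt_R0; lra).
    assert (Q2 : 0 < sqrt (INR n1 * p * (1 - p))) by (apply sqrt_lt_R0; lra).
    assert (Q3 : sqrt (INR n1 * p * (1-p)) <= 2 * sqrt (INR n1 * p1 * (1 - p1))).
    { rewrite <- (sqrt_square 2) at 1 by lra. rewrite <- sqrt_mult by (try lra; nra).
      apply sqrt_le_1_alt. assert (0 <= INR n1) by apply pos_INR. nra. }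
    apply Rmult_le_reg_r with (sqrt (INR n1 * p1 * (1 - p1)) * sqrt (INR n1 * p * (1 - p))).
    nra. unfold Rdiv.
    replace (3 * / sqrt (INR n1 * p1 * (1 - p1)) * (sqrt (INR n1 * p1 * (1 - p1)) * sqrt (INR n1 * p * (1 - p))))
      with (3 * sqrt (INR n1 * p * (1 - p))) by (field; lra).
    replace (6 * / sqrt (INR n1 * p * (1 - p)) * (sqrt (INR n1 * p1 * (1 - p1)) * sqrt (INR n1 * p * (1 - p))))
      with (6 * sqrt (INR n1 * p1 * (1 - p1))) by (field; lra).
    lra. }
  rewrite <- EX, !exp_plus.
  assert (0 < 3 / sqrt (INR n1 * p1 * (1 - p1))) by (apply Rdiv_lt_0_compat; [lra|apply sqrt_lt_R0; lra]).
  pose proof (exp_pos (INR n1 * (p*t + a))). pose proof (exp_pos (INR n2 * (-(p*t) + a))).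
  pose proof (exp_pos (-(t*(p*T)))).
  assert (0 <= s1 ^ n1) by (apply pow_le; lra). assert (0 <= s2 ^ n2) by (apply pow_le; lra).
  apply Rmult_le_compat; try lra.
  - apply Rmult_le_pos; [apply Rmult_le_pos|]; lra.
  - apply Rmult_le_compat_r; [lra|]. apply Rmult_le_compat; lra.
Qed.

Lemma basic_facts (N : nat) p : 0 <= p <= 1 -> 1 < p * (1-p) * INR N ->
  0 < p < 1 /\ 0 < INR N.
Proof.
  intros Hp Hv. pose proof (pos_INR N).
  destruct (Req_dec p 0) as [E|E]; [subst; lra|].
  destruct (Req_dec p 1) as [E'|E']; [subst; lra|].
  destruct (Req_dec (INR N) 0) as [E''|E'']; [rewrite E'' in Hv; lra|].
  lra.
Qed.

Lemma Rpow23 v : 0 < v -> Rpower v (2/3) ^ 3 = v ^ 2.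
Proof.
  intros Hv. rewrite <- Rpower_pow by (apply exp_pos).
  rewrite Rpower_mult. rewrite <- Rpower_pow by auto. f_equal. simpl. field.
Qed.

Lemma pointwise (N n1 n2 : nat) p S T : 0 <= p <= 1 ->
  INR n1 = INR N - S -> INR n2 = INR N + S - T ->
  100 < p * (1-p) * INR N ->
  100 < p * S / sqrt (p * (1-p) * INR N) ->
  Rabs (p * S / Rpower (p * (1-p) * INR N) (2/3) - 0) < 1/4 ->
  Rabs (T / INR N - 0) < 1/2 ->
  prob_diff_eq n1 n2 p (p * T) <
      S / (2 * PI * (1 - p) * INR N) *
        exp (- (2 * p * S ^ 2) / ((1 - p) * (2 * INR N - T)) +
             8 * (p*S)^3 / (p * (1-p) * (2 * INR N - T))^2)
      + 3 / (PI * p * S) *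
        exp (- (9 * p * S ^ 2) / (8 * (1 - p) * INR N)).
Proof.
  intros Hp H1 H2 Hv HS1 HS2 HT.
  destruct (basic_facts N p Hp ltac:(lra)) as [Hp' HN].
  set (v := p * (1-p) * INR N) in *.
  assert (Hq : 0 < 1 - p) by lra.
  assert (Hsv : 0 < sqrt v) by (apply sqrt_lt_R0; lra).
  assert (Hsv2 : sqrt v * sqrt v = v) by (apply sqrt_sqrt; lra).
  assert (HpS : 100 * sqrt v < p * S).
  { apply Rmult_lt_reg_r with (/ sqrt v). apply Rinv_0_lt_compat; lra.
    rewrite Rmult_assoc, Rinv_r by lra. lra. }
  assert (HS : 0 < S) by (assert (0 < p * S) by lra; nra).
  set (R := Rpower v (2/3)) in *.
  assert (HR : 0 < R) by (unfold R, Rpower; apply exp_pos).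
  assert (HRv : R <= v).
  { unfold R. rewrite <- (Rpower_1 v) at 2 by lra. apply Rle_Rpower; lra. }
  assert (HpS2 : p * S < R / 4).
  { rewrite Rminus_0_r in HS2. apply Rabs_def2 in HS2. destruct HS2 as [HS2 _].
    apply Rmult_lt_reg_r with (/ R). apply Rinv_0_lt_compat; lra.
    replace (R / 4 * / R) with (1/4) by (field; lra). exact HS2. }
  assert (HTN : Rabs T < INR N / 2).
  { rewrite Rminus_0_r in HT. unfold Rdiv in HT. rewrite Rabs_mult, Rabs_inv, (Rabs_right (INR N)) in HT by lra.
    apply Rmult_lt_reg_r with (/ INR N). apply Rinv_0_lt_compat; lra.
    replace (INR N / 2 * / INR N) with (1/2) by (field; lra). exact HT. }
  apply Rabs_def2 in HTN. destruct HTN as [HT1 HT2].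
  assert (HSq : S < (1-p) * INR N / 4).
  { apply Rmult_lt_reg_l with p. lra. unfold v in HRv. nra. }
  assert (Hn1 : 3 * v / 4 <= INR n1 * p * (1-p)).
  { rewrite H1. unfold v. assert (0 < p * (1-p)) by nra. nra. }
  assert (HW : 2 * p * S <= p * (1-p) * (2 * INR N - T)).
  { assert (0 < p*(1-p)) by nra.
    assert (p * (1-p) * (INR N) <= p * (1-p) * (2 * INR N - T)) by (apply Rmult_le_compat_l; lra).
    unfold v in *. lra. }
  assert (HA : 0 < 2 * INR N - T) by lra. assert (HB : 0 <= S) by lra.
  assert (HC : 12 <= INR n1 * p * (1-p)) by lra.
  pose proof (key2 N n1 n2 p S T Hp' H1 H2 HA HB HW HC) as K.
  set (X := - (2 * p * S ^ 2) / ((1 - p) * (2 * INR N - T)) +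
             8 * (p*S)^3 / (p * (1-p) * (2 * INR N - T))^2) in *.
  assert (Hb : 6 / sqrt (INR n1 * p * (1-p)) <= S / (2 * PI * (1 - p) * INR N)).
  { set (b := sqrt (INR n1 * p * (1-p))).
    assert (Hb0 : 0 < b) by (apply sqrt_lt_R0; lra).
    assert (Hb2 : b * b = INR n1 * p * (1-p)) by (apply sqrt_sqrt; lra).
    assert (Hab : sqrt v <= 2 * b) by nra.
    pose proof PI_RGT_0. pose proof PI_4.
    assert (0 < 2 * PI * (1 - p) * INR N) by (apply Rmult_lt_0_compat; [apply Rmult_lt_0_compat; [apply Rmult_lt_0_compat|]|]; lra).
    apply Rmult_le_reg_r with (b * (2 * PI * (1 - p) * INR N) * p). { apply Rmult_lt_0_compat; [apply Rmult_lt_0_compat|]; lra. }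
    replace (6 / b * (b * (2 * PI * (1 - p) * INR N) * p)) with (12 * PI * v) by (unfold v; field; lra).
    replace (S / (2 * PI * (1 - p) * INR N) * (b * (2 * PI * (1 - p) * INR N) * p)) with (p * S * b) by (field; lra).
    assert (12 * PI * v <= 50 * v) by nra.
    assert (50 * v <= p * S * b).
    { rewrite <- Hsv2. nra. }
    lra. }
  assert (Hsec : 0 < 3 / (PI * p * S) * exp (- (9 * p * S ^ 2) / (8 * (1 - p) * INR N))).
  { apply Rmult_lt_0_compat; [|apply exp_pos]. apply Rdiv_lt_0_compat; [lra|].
    pose proof PI_RGT_0. apply Rmult_lt_0_compat; [apply Rmult_lt_0_compat|]; lra. }
  pose proof (exp_pos X).
  assert (exp X * (6 / sqrt (INR n1 * p * (1-p))) <= S / (2 * PI * (1 - p) * INR N) * exp X).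
  { rewrite Rmult_comm. apply Rmult_le_compat_r; lra. }
  lra.
Qed.

Lemma eps_small x Rr v V d : 0 < v <= V -> 0 < Rr -> Rr^3 = v^2 -> 0 < d <= 1 ->
  Rabs x < d * Rr -> Rabs (8 * x^3 / V^2) < 8 * d.
Proof.
  intros Hv HR HR3 Hd Hx.
  assert (HV2 : v^2 <= V^2) by nra.
  assert (Hv2 : 0 < v^2) by nra.
  unfold Rdiv. rewrite !Rabs_mult, Rabs_inv, <- !RPow_abs.
  rewrite (Rabs_right 8) by lra. rewrite (Rabs_right V) by lra.
  assert (Ha : 0 <= Rabs x) by apply Rabs_pos. remember (Rabs x) as a eqn:Ea.
  assert (a^3 < (d*Rr)^3).
  { assert (0 < d * Rr) by (apply Rmult_lt_0_compat; lra). simpl. rewrite !Rmult_1_r.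
    assert (a * a <= (d*Rr) * (d*Rr)) by nra. apply Rle_lt_trans with (a * ((d*Rr)*(d*Rr))).
    apply Rmult_le_compat_l; lra. apply Rmult_lt_compat_r; [|lra]. apply Rmult_lt_0_compat; lra. }
  assert ((d*Rr)^3 <= d * v^2).
  { replace ((d*Rr)^3) with (d^3 * Rr^3) by ring. rewrite HR3.
    apply Rmult_le_compat_r; [lra|]. nra. }
  apply Rmult_lt_reg_r with (V^2). nra.
  replace (8 * a ^ 3 * / V ^ 2 * V ^ 2) with (8 * a^3) by (field; nra).
  nra.
Qed.

Theorem mainTheorem13
  (p S T : nat -> R) (n1 n2 : nat -> nat)
  (hp : forall N, 0 <= p N <= 1)
  (hn1 : forall N, INR (n1 N) = INR N - S N)
  (hn2 : forall N, INR (n2 N) = INR N + S N - T N)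
  (hvar : cv_infty (fun N => p N * (1 - p N) * INR N))
  (hS1 : cv_infty (fun N => p N * S N / sqrt (p N * (1 - p N) * INR N)))
  (hS2 : Un_cv (fun N => p N * S N / Rpower (p N * (1 - p N) * INR N) (2 / 3)) 0)
  (hT : Un_cv (fun N => T N / INR N) 0) :
  exists eps : nat -> R, Un_cv eps 0 /\
  exists N0 : nat, forall N : nat, (N0 <= N)%nat ->
    prob_diff_eq (n1 N) (n2 N) (p N) (p N * T N) <
      S N / (2 * PI * (1 - p N) * INR N) *
        exp (- (2 * p N * S N ^ 2) / ((1 - p N) * (2 * INR N - T N)) + eps N)
      + 3 / (PI * p N * S N) *
        exp (- (9 * p N * S N ^ 2) / (8 * (1 - p N) * INR N)).
Proof.
  exists (fun N => 8 * (p N * S N)^3 / (p N * (1 - p N) * (2 * INR N - T N))^2).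
  split.
  - intros e He. set (d := Rmin 1 (e/8)).
    assert (Hd : 0 < d <= 1) by (unfold d; split; [apply Rmin_glb_lt; lra|apply Rmin_l]).
    assert (Hde : 8 * d <= e) by (unfold d; pose proof (Rmin_r 1 (e/8)); lra).
    destruct (hS2 d ltac:(lra)) as [N1 H1]. destruct (hvar 1) as [N2 H2].
    destruct (hT (1/2) ltac:(lra)) as [N3 H3].
    exists (Nat.max N1 (Nat.max N2 N3)). intros n Hn.
    specialize (H1 n ltac:(lia)). specialize (H2 n ltac:(lia)). specialize (H3 n ltac:(lia)).
    simpl in H2. unfold Rdist in *. rewrite Rminus_0_r in *.
    destruct (basic_facts n (p n) (hp n) H2) as [Hp HN].
    set (v := p n * (1 - p n) * INR n) in *.
    assert (HR : 0 < Rpower v (2/3)) by (unfold Rpower; apply exp_pos).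
    assert (HTN : Rabs (T n) < INR n / 2).
    { unfold Rdiv in H3. rewrite Rabs_mult, Rabs_inv, (Rabs_right (INR n)) in H3 by lra.
      apply Rmult_lt_reg_r with (/ INR n). apply Rinv_0_lt_compat; lra.
      replace (INR n / 2 * / INR n) with (1/2) by (field; lra). exact H3. }
    apply Rabs_def2 in HTN.
    assert (HV : 0 < v <= p n * (1 - p n) * (2 * INR n - T n)).
    { split; [lra|]. unfold v. apply Rmult_le_compat_l; [nra|lra]. }
    assert (Hx : Rabs (p n * S n) < d * Rpower v (2/3)).
    { replace (p n * S n) with ((p n * S n / Rpower v (2/3)) * Rpower v (2/3)) by (field; lra).
      rewrite Rabs_mult, (Rabs_right (Rpower v (2/3))) by lra.
      apply Rmult_lt_compat_r; lra. }
    pose proof (eps_small (p n * S n) (Rpower v (2/3)) v _ d HV HR (Rpow23 v ltac:(lra)) Hd Hx).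
    lra.
  - destruct (hvar 100) as [N1 H1]. destruct (hS1 100) as [N2 H2].
    destruct (hS2 (1/4) ltac:(lra)) as [N3 H3]. destruct (hT (1/2) ltac:(lra)) as [N4 H4].
    exists (Nat.max (Nat.max N1 N2) (Nat.max N3 N4)). intros N HN.
    apply pointwise; auto.
    + apply H1; lia.
    + apply H2; lia.
    + apply H3; lia.
    + apply H4; lia.
Qed.
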